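(* Let $X=[\alpha,\beta]$ be a compact interval, $w$ a positive continuous function on $X$, and $\langle f,g\rangle_w=\int_Xf(x)\overline{g(x)}w(x)\,dx$. Let $B_1,\dots,B_n\in C(X)$ be linearly independent, $U_n$ their span, and $S=(s_{i,j})$ with $s_{i,j}=\langle B_i,B_j\rangle_w$. Assume $S$ is tridiagonal ($s_{i,j}=0$ if $|i-j|\ge2$) and row diagonally dominant with factor $c\in(0,1)$, i.e. $|s_{j-1,j}|+|s_{j,j+1}|\le c\,|s_{j,j}|$ for $j=1,\dots,n$, with the convention $s_{0,1}=s_{n,n+1}=0$. Then $$\|P^{U_n}\|_{op}\le\frac{\max_{x\in X}\sum_{j=1}^n|B_j(x)|}{1-c}\max_{1\le j\le n}\frac{\int_X|B_j(y)|w(y)\,dy}{\int_X|B_j(y)|^2w(y)\,dy}.$$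
   Context: $P^{U_n}:C(X)\to C(X)$ maps $f$ to its best approximation from $U_n$ in the norm $\|f\|_w=\sqrt{\langle f,f\rangle_w}$ (the $\langle\cdot,\cdot\rangle_w$-orthogonal projection onto $U_n$), and $\|P^{U_n}\|_{op}=\sup_{f\ne0}\|P^{U_n}f\|_X/\|f\|_X$ with $\|f\|_X=\max_{x\in X}|f(x)|$. *)

(* Defs.v *)
From Stdlib Require Import Reals List.
From Coquelicot Require Import Coquelicot.
Open Scope R_scope.

Definition CInt (f : R -> C) (a b : R) : C :=
  @RInt C_R_CompleteNormedModule f a b.

Definition inX (al be x : R) : Prop := al <= x <= be.

Definition cont_on_X {V : UniformSpace} (al be : R) (f : R -> V) : Prop :=
  forall x, inX al be x ->
    filterlim f (within (inX al be) (locally x)) (locally (f x)).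

Definition inner_w (al be : R) (w : R -> R) (f g : R -> C) : C :=
  CInt (fun x => (f x * Cconj (g x) * RtoC (w x))%C) al be.

Definition Csum (n : nat) (F : nat -> C) : C :=
  fold_right Cplus (RtoC 0) (map F (seq 0 n)).

Definition lin_indep (al be : R) (n : nat) (B : nat -> R -> C) : Prop :=
  forall a : nat -> C,
    (forall x, inX al be x -> Csum n (fun j => (a j * B j x)%C) = RtoC 0) ->
    forall j, (j < n)%nat -> a j = RtoC 0.

Definition in_span (al be : R) (n : nat) (B : nat -> R -> C) (u : R -> C) : Prop :=
  exists a : nat -> C, forall x, inX al be x -> u x = Csum n (fun j => (a j * B j x)%C).

Definition is_proj (al be : R) (w : R -> R) (n : nat) (B : nat -> R -> C)
  (f g : R -> C) : Prop :=
  in_span al be n B g /\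
  forall u, in_span al be n B u ->
    inner_w al be w (fun x => (f x - g x)%C) u = RtoC 0.

Definition supnorm (al be : R) (f : R -> C) : R :=
  real (Lub_Rbar (fun r => exists x, inX al be x /\ r = Cmod (f x))).

Definition opnorm_proj (al be : R) (w : R -> R) (n : nat) (B : nat -> R -> C) : Rbar :=
  Lub_Rbar (fun r => exists f g : R -> C,
    cont_on_X al be f /\ (exists x, inX al be x /\ f x <> RtoC 0) /\
    is_proj al be w n B f g /\
    r = supnorm al be g / supnorm al be f).

(* Gram matrix entries s_{i,j} = <B_i, B_j>_w  (0-indexed) *)
Definition gram (al be : R) (w : R -> R) (B : nat -> R -> C) (i j : nat) : C :=
  inner_w al be w (B i) (B j).

(* max of a real list (all entries here are nonnegative; empty max = 0) *)
Definition maxlist (l : list R) : R := fold_right Rmax 0 l.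

(* Main.v *)
Require Import Defs.
From Stdlib Require Import Reals List Lra Lia FunctionalExtensionality Classical.
From Coquelicot Require Import Coquelicot.
Open Scope R_scope.

Definition clamp (al be x : R) := Rmax al (Rmin be x).

Lemma clamp_X al be x : al <= be -> inX al be (clamp al be x).
Proof. intros. unfold inX, clamp, Rmax, Rmin. repeat destruct Rle_dec; lra. Qed.

Lemma clamp_id al be x : inX al be x -> clamp al be x = x.
Proof. unfold inX, clamp; intros. rewrite Rmin_right by lra. rewrite Rmax_right; lra. Qed.

Lemma clamp_lip al be x y : al <= be -> Rabs (clamp al be y - clamp al be x) <= Rabs (y - x).
Proof. intros. unfold clamp, Rmax, Rmin. repeat destruct Rle_dec; unfold Rabs; repeat destruct Rcase_abs; lra. Qed.

Lemma ball_R (x e y : R) : ball x e y <-> Rabs (y - x) < e.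
Proof. reflexivity. Qed.

Lemma cont_ext {V : UniformSpace} al be (f : R -> V) :
  al <= be -> cont_on_X al be f -> forall x, continuous (fun y => f (clamp al be y)) x.
Proof.
 intros Hab Hf x. unfold continuous.
 apply filterlim_comp with (G := within (inX al be) (locally (clamp al be x))).
 - intros P [eps H]. exists eps. intros y Hy. apply H.
   + apply ball_R. apply ball_R in Hy. eapply Rle_lt_trans; [apply clamp_lip; lra| exact Hy].
   + apply clamp_X; lra.
 - apply Hf. apply clamp_X; lra.
Qed.


Lemma contC_fst (F : R -> C) x : @continuous R_UniformSpace C_UniformSpace F x -> continuous (fun y => fst (F y)) x.
Proof. intros H. apply (@continuous_comp R_UniformSpace C_UniformSpace R_UniformSpace F fst x H).
 destruct (F x) as [u v]. apply (@continuous_fst R_UniformSpace R_UniformSpace). Qed.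
Lemma contC_snd (F : R -> C) x : @continuous R_UniformSpace C_UniformSpace F x -> continuous (fun y => snd (F y)) x.
Proof. intros H. apply (@continuous_comp R_UniformSpace C_UniformSpace R_UniformSpace F snd x H).
 destruct (F x) as [u v]. apply (@continuous_snd R_UniformSpace R_UniformSpace). Qed.
Lemma contC_pair (f g : R -> R) x : continuous f x -> continuous g x ->
  @continuous R_UniformSpace C_UniformSpace (fun y => (f y, g y) : C) x.
Proof. intros Hf Hg. unfold continuous. apply filterlim_locally. intros eps.
 apply filterlim_locally with (eps := eps) in Hf. apply filterlim_locally with (eps := eps) in Hg.
 generalize (filter_and _ _ Hf Hg). apply filter_imp. intros y [H1 H2]. split; assumption. Qed.
Lemma contC_intro (F : R -> C) x : continuous (fun y => fst (F y)) x -> continuous (fun y => snd (F y)) x ->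
  @continuous R_UniformSpace C_UniformSpace F x.
Proof. intros. assert (E: F = fun y => (fst (F y), snd (F y)) : C).
 { apply functional_extensionality. intros. apply surjective_pairing. }
 rewrite E. apply contC_pair; auto. Qed.

Lemma cR_mult (f g : R -> R) x : continuous f x -> continuous g x -> continuous (fun y => f y * g y) x.
Proof. intros. apply (@continuous_mult R_UniformSpace R_AbsRing); auto. Qed.
Lemma cR_plus (f g : R -> R) x : continuous f x -> continuous g x -> continuous (fun y => f y + g y) x.
Proof. intros. apply (@continuous_plus R_UniformSpace R_AbsRing R_NormedModule); auto. Qed.
Lemma cR_opp (f : R -> R) x : continuous f x -> continuous (fun y => - f y) x.
Proof. intros. apply (@continuous_opp R_UniformSpace R_AbsRing R_NormedModule); auto. Qed.
Lemma cR_minus (f g : R -> R) x : continuous f x -> continuous g x -> continuous (fun y => f y - g y) x.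
Proof. intros. unfold Rminus. apply cR_plus; auto. apply cR_opp; auto. Qed.

Lemma norm_Cmod (z : C) : @norm _ C_R_NormedModule z = Cmod z.
Proof. destruct z as [u v]. unfold norm. simpl. unfold prod_norm, Cmod. simpl. f_equal.
 change (@norm _ R_NormedModule u) with (Rabs u). change (@norm _ R_NormedModule v) with (Rabs v).
 rewrite !Rmult_1_r. generalize (Rsqr_abs u) (Rsqr_abs v). unfold Rsqr. intros -> ->. ring. Qed.

Lemma cont_Cmod (F : R -> C) x : @continuous R_UniformSpace C_UniformSpace F x -> continuous (fun y => Cmod (F y)) x.
Proof. intros H.
 apply (continuous_ext (fun y => @norm _ C_R_NormedModule (F y))).
 { intros. now rewrite norm_Cmod. }
 apply (@continuous_comp R_UniformSpace C_UniformSpace R_UniformSpace F (@norm _ C_R_NormedModule) x H).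
 apply (@filterlim_norm R_AbsRing C_R_NormedModule). Qed.

Ltac contR := repeat match goal with
 | |- continuous (fun y => _ * _) _ => apply cR_mult
 | |- continuous (fun y => _ + _) _ => apply cR_plus
 | |- continuous (fun y => _ - _) _ => apply cR_minus
 | |- continuous (fun y => - _) _ => apply cR_opp
 | |- continuous (fun y => fst _) _ => apply contC_fst; assumption
 | |- continuous (fun y => snd _) _ => apply contC_snd; assumption
 | |- continuous (fun y => ?k) _ => apply continuous_const
 | |- _ => assumption
end.

Lemma cont_integrand (F G : R -> C) (W : R -> R) x :
  @continuous R_UniformSpace C_UniformSpace F x -> @continuous R_UniformSpace C_UniformSpace G x -> continuous W x ->
  @continuous R_UniformSpace C_UniformSpace (fun y => (F y * Cconj (G y) * RtoC (W y))%C) x.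
Proof. intros. apply contC_intro; simpl; contR. Qed.


Notation isC := (@is_RInt C_R_NormedModule).

Lemma isC_pair (h : R -> C) a b (u v : R) :
  is_RInt (fun x => fst (h x)) a b u -> is_RInt (fun x => snd (h x)) a b v -> isC h a b (u, v).
Proof. intros. apply (@is_RInt_fct_extend_pair R_NormedModule R_NormedModule); auto. Qed.
Lemma isC_fst (h : R -> C) a b I : isC h a b I -> is_RInt (fun x => fst (h x)) a b (fst I).
Proof. intros. apply (@is_RInt_fct_extend_fst R_NormedModule R_NormedModule); auto. Qed.
Lemma isC_snd (h : R -> C) a b I : isC h a b I -> is_RInt (fun x => snd (h x)) a b (snd I).
Proof. intros. apply (@is_RInt_fct_extend_snd R_NormedModule R_NormedModule); auto. Qed.

Lemma isC_conj (h : R -> C) a b I : isC h a b I -> isC (fun x => Cconj (h x)) a b (Cconj I).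
Proof. intros H. destruct I as [u v]. unfold Cconj at 2. simpl. apply isC_pair; simpl.
 - apply (isC_fst _ _ _ _ H).
 - apply (@is_RInt_opp R_NormedModule _ _ _ v). apply (isC_snd _ _ _ _ H). Qed.

Lemma isC_mult_l (c : C) (h : R -> C) a b I : isC h a b I -> isC (fun x => c * h x)%C a b (c * I)%C.
Proof. intros H. destruct I as [u v]. destruct c as [p q]. simpl. apply isC_pair; simpl.
 - apply (@is_RInt_minus R_NormedModule). apply (@is_RInt_scal R_NormedModule _ _ _ p _ (isC_fst _ _ _ _ H)).
   apply (@is_RInt_scal R_NormedModule _ _ _ q _ (isC_snd _ _ _ _ H)).
 - apply (@is_RInt_plus R_NormedModule). apply (@is_RInt_scal R_NormedModule _ _ _ p _ (isC_snd _ _ _ _ H)).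
   apply (@is_RInt_scal R_NormedModule _ _ _ q _ (isC_fst _ _ _ _ H)). Qed.

Lemma isC_plus (g h : R -> C) a b I J : isC g a b I -> isC h a b J -> isC (fun x => g x + h x)%C a b (I + J)%C.
Proof. intros. apply (@is_RInt_plus C_R_NormedModule); auto. Qed.
Lemma isC_minus (g h : R -> C) a b I J : isC g a b I -> isC h a b J -> isC (fun x => g x - h x)%C a b (I - J)%C.
Proof. intros. apply (@is_RInt_minus C_R_NormedModule); auto. Qed.
Lemma isC_RtoC (r : R -> R) a b I : is_RInt r a b I -> isC (fun x => RtoC (r x)) a b (RtoC I).
Proof. intros. apply isC_pair; simpl; auto.
 generalize (@is_RInt_const R_NormedModule a b 0). replace (scal (b - a) (0:R_NormedModule)) with 0. auto.
 change (scal (b-a) (0:R_NormedModule)) with ((b-a)*0). ring. Qed.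

Lemma CInt_unique (h : R -> C) a b I : isC h a b I -> CInt h a b = I.
Proof. intros. unfold CInt. apply (@is_RInt_unique C_R_CompleteNormedModule). exact H. Qed.


Definition rsum (n : nat) (F : nat -> R) : R := fold_right Rplus 0 (map F (seq 0 n)).

Lemma fold_Cplus_shift (l : list C) z : fold_right Cplus z l = (fold_right Cplus (RtoC 0) l + z)%C.
Proof. induction l; simpl. ring. rewrite IHl. ring. Qed.
Lemma fold_Rplus_shift (l : list R) z : fold_right Rplus z l = fold_right Rplus 0 l + z.
Proof. induction l; simpl. ring. rewrite IHl. ring. Qed.

Lemma Csum_S n F : Csum (S n) F = (Csum n F + F n)%C.
Proof. unfold Csum. rewrite seq_S, map_app, fold_right_app. simpl.
 rewrite fold_Cplus_shift. f_equal. ring. Qed.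
Lemma rsum_S n F : rsum (S n) F = rsum n F + F n.
Proof. unfold rsum. rewrite seq_S, map_app, fold_right_app. simpl.
 rewrite fold_Rplus_shift. f_equal. ring. Qed.
Lemma Csum_0 F : Csum 0 F = RtoC 0. Proof. reflexivity. Qed.
Lemma rsum_0 F : rsum 0 F = 0. Proof. reflexivity. Qed.

Lemma Csum_ext n F G : (forall k, (k < n)%nat -> F k = G k) -> Csum n F = Csum n G.
Proof. induction n; intros H. reflexivity. rewrite !Csum_S. rewrite IHn by (intros; apply H; lia). rewrite H by lia. reflexivity. Qed.
Lemma rsum_ext n F G : (forall k, (k < n)%nat -> F k = G k) -> rsum n F = rsum n G.
Proof. induction n; intros H. reflexivity. rewrite !rsum_S. rewrite IHn by (intros; apply H; lia). rewrite H by lia. reflexivity. Qed.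
Lemma rsum_le n F G : (forall k, (k < n)%nat -> F k <= G k) -> rsum n F <= rsum n G.
Proof. induction n; intros H. rewrite !rsum_0; lra. rewrite !rsum_S. assert (F n <= G n) by (apply H; lia).
 assert (rsum n F <= rsum n G) by (apply IHn; intros; apply H; lia). lra. Qed.
Lemma rsum_ge0 n F : (forall k, (k < n)%nat -> 0 <= F k) -> 0 <= rsum n F.
Proof. intros. replace 0 with (rsum n (fun _ => 0)). apply rsum_le; auto.
 induction n. reflexivity. rewrite rsum_S, IHn. ring. intros; apply H; lia. Qed.
Lemma Cmod_Csum n F : Cmod (Csum n F) <= rsum n (fun k => Cmod (F k)).
Proof. induction n. rewrite Csum_0, rsum_0, Cmod_0; lra.
 rewrite Csum_S, rsum_S. eapply Rle_trans. apply Cmod_triangle. lra. Qed.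
Lemma Csum_mult_r n F z : (Csum n F * z)%C = Csum n (fun k => F k * z)%C.
Proof. induction n. rewrite !Csum_0. ring. rewrite !Csum_S, <- IHn. ring. Qed.
Lemma rsum_mult_l n F c : c * rsum n F = rsum n (fun k => c * F k).
Proof. induction n. rewrite !rsum_0. ring. rewrite !rsum_S, <- IHn. ring. Qed.

Lemma Csum_ind n F i : (i < n)%nat -> Csum n (fun k => (if Nat.eqb k i then RtoC 1 else RtoC 0) * F k)%C = F i.
Proof. induction n; intros H. lia. rewrite Csum_S. destruct (Nat.eqb_spec n i).
 - subst. replace (Csum i _) with (RtoC 0). ring.
   clear. rewrite (Csum_ext _ _ (fun _ => RtoC 0)). induction i. reflexivity. rewrite Csum_S, <- IHi. ring.
   intros. destruct (Nat.eqb_spec k i). lia. ring.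
 - rewrite IHn by lia. ring. Qed.

Lemma Csum_split n F j : (j < n)%nat -> Csum n F = (F j + Csum n (fun k => if Nat.eqb k j then RtoC 0 else F k))%C.
Proof. induction n; intros H. lia. rewrite !Csum_S. destruct (Nat.eqb_spec n j).
 - subst. rewrite (Csum_ext j (fun k => if Nat.eqb k j then _ else _) F). ring.
   intros. destruct (Nat.eqb_spec k j). lia. reflexivity.
 - rewrite IHn by lia. ring. Qed.

Ltac dltb := repeat match goal with |- context [Nat.ltb ?a ?b] => destruct (Nat.ltb_spec a b) end.

Lemma rsum_tri n F j :
  (forall k, (k < n)%nat -> k <> j -> (S k <> j) -> k <> S j -> F k = 0) ->
  rsum n (fun k => if Nat.eqb k j then 0 else F k) =
  (match j with O => 0 | S p => if Nat.ltb p n then F p else 0 end) + (if Nat.ltb (S j) n then F (S j) else 0).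
Proof. induction n; intros H.
 - rewrite rsum_0. destruct j; simpl; ring.
 - rewrite rsum_S, IHn by (intros; apply H; lia).
   destruct (Nat.eqb_spec n j).
   + subst. destruct j; dltb; try lia; ring.
   + destruct j as [|p]; dltb; try lia.
     all: first [ (rewrite (H n) by lia; ring) | (replace n with 1%nat by lia; ring)
       | (replace n with p by lia; ring) | (replace n with (S (S p)) by lia; ring) ].
Qed.


Lemma lub_fin (E : R -> Prop) e M : E e -> (forall r, E r -> r <= M) ->
  (forall r, E r -> r <= real (Lub_Rbar E)) /\ real (Lub_Rbar E) <= M.
Proof. intros He HM. destruct (Lub_Rbar_correct E) as [Hub Hl].
 assert (H1 : Rbar_le (Lub_Rbar E) M) by (apply Hl; intros r Hr; simpl; apply HM; auto).
 assert (H2 : Rbar_le e (Lub_Rbar E)) by (apply Hub; auto).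
 destruct (Lub_Rbar E) as [l| |]; simpl in *; try contradiction.
 split; [intros r Hr; apply (Hub r Hr) | auto]. Qed.

Lemma lub_le (E : R -> Prop) M : (forall r, E r -> r <= M) -> 0 <= M -> real (Lub_Rbar E) <= M.
Proof. intros HM H0. destruct (Lub_Rbar_correct E) as [Hub Hl].
 assert (H1 : Rbar_le (Lub_Rbar E) M) by (apply Hl; intros r Hr; simpl; apply HM; auto).
 destruct (Lub_Rbar E) as [l| |]; simpl in *; try contradiction; auto. Qed.

Lemma cont_max (phi : R -> R) al be : al <= be -> (forall x, continuous phi x) ->
  exists M, forall x, inX al be x -> phi x <= M.
Proof. intros Hab Hc. destruct (continuity_ab_maj phi al be Hab) as [m [Hm _]].
 intros c _. apply continuity_pt_filterlim. apply Hc.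
 exists (phi m). intros x Hx. apply Hm. exact Hx. Qed.

Lemma RInt_pos (phi : R -> R) al be x0 : al < be -> (forall x, continuous phi x) ->
  (forall x, inX al be x -> 0 <= phi x) -> inX al be x0 -> 0 < phi x0 -> 0 < RInt phi al be.
Proof. intros Hab Hc Hnn Hx0 Hp.
 assert (Hl : locally x0 (fun y => phi x0 / 2 < phi y)).
 { specialize (Hc x0). apply filterlim_locally with (eps := mkposreal (phi x0 / 2) ltac:(lra)) in Hc.
   revert Hc. apply filter_imp. intros y Hy. change (Rabs (phi y - phi x0) < phi x0 / 2) in Hy.
   apply Rabs_def2 in Hy. lra. }
 destruct Hl as [eps Heps].
 set (u := Rmax al (x0 - eps / 2)). set (v := Rmin be (x0 + eps / 2)).
 assert (Hu : al <= u <= x0) by (unfold u, Rmax, inX in *; destruct Rle_dec; destruct eps; simpl in *; lra).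
 assert (Hv : x0 <= v <= be) by (unfold v, Rmin, inX in *; destruct Rle_dec; destruct eps; simpl in *; lra).
 assert (Huv : u < v) by (unfold u, v, Rmax, Rmin, inX in *; repeat destruct Rle_dec; destruct eps; simpl in *; lra).
 assert (Hex : forall a b, ex_RInt phi a b) by (intros; apply (@ex_RInt_continuous R_CompleteNormedModule); intros; apply Hc).
 rewrite <- (RInt_Chasles phi al u be) by auto.
 rewrite <- (RInt_Chasles phi u v be) by auto.
 change (0 < RInt phi al u + (RInt phi u v + RInt phi v be)).
 assert (0 <= RInt phi al u) by (apply RInt_ge_0; auto; try lra; intros; apply Hnn; unfold inX; lra).
 assert (0 <= RInt phi v be) by (apply RInt_ge_0; auto; try lra; intros; apply Hnn; unfold inX; lra).
 assert (0 < RInt phi u v).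
 { apply RInt_gt_0; auto. intros x Hx. apply Rlt_trans with (phi x0 / 2). lra.
   apply Heps. change (Rabs (x - x0) < eps). unfold u, v, Rmax, Rmin in Hx.
   destruct eps as [e He]; simpl in *. repeat destruct Rle_dec; apply Rabs_def1; lra. }
 lra. Qed.


Ltac Ceq := apply injective_projections; simpl; ring.

Lemma isC_Csum n (G : nat -> R -> C) I a b : (forall k, (k < n)%nat -> isC (G k) a b (I k)) ->
  isC (fun x => Csum n (fun k => G k x)) a b (Csum n I).
Proof. induction n; intros H.
 - apply (is_RInt_ext (fun _ => RtoC 0)). intros; reflexivity.
   apply (isC_RtoC (fun _ => 0)). generalize (@is_RInt_const R_NormedModule a b 0).
   replace (scal (b - a) (0:R_NormedModule)) with 0. auto.
   change (scal (b-a) (0:R_NormedModule)) with ((b-a)*0). ring.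
 - rewrite Csum_S. apply (is_RInt_ext (fun x => Csum n (fun k => G k x) + G n x)%C).
   intros; now rewrite Csum_S. apply isC_plus. apply IHn; intros; apply H; lia. apply H; lia. Qed.

Lemma isR_X al be (phi phit : R -> R) : al <= be -> (forall x, continuous phit x) ->
  (forall x, inX al be x -> phit x = phi x) -> is_RInt phi al be (RInt phi al be).
Proof. intros Hab Hc He.
 assert (E : RInt phi al be = RInt phit al be).
 { apply RInt_ext. intros x Hx. symmetry. apply He. unfold inX, Rmin, Rmax in *. destruct Rle_dec; lra. }
 rewrite E. apply (is_RInt_ext phit). intros x Hx. apply He. unfold inX, Rmin, Rmax in *. destruct Rle_dec; lra.
 apply (@RInt_correct R_CompleteNormedModule). apply (@ex_RInt_continuous R_CompleteNormedModule). intros; apply Hc. Qed.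

Lemma isC_X al be (h ht : R -> C) : al <= be -> (forall x, @continuous R_UniformSpace C_UniformSpace ht x) ->
  (forall x, inX al be x -> ht x = h x) -> isC h al be (CInt h al be).
Proof. intros Hab Hc He.
 assert (Hi : isC ht al be (CInt ht al be)).
 { apply (@RInt_correct C_R_CompleteNormedModule). apply (@ex_RInt_continuous C_R_CompleteNormedModule). intros; apply Hc. }
 assert (Hi2 : isC h al be (CInt ht al be)).
 { apply (is_RInt_ext ht). intros x Hx. apply He. unfold inX, Rmin, Rmax in *. destruct Rle_dec; lra. exact Hi. }
 rewrite (CInt_unique _ _ _ _ Hi2). exact Hi2. Qed.

Lemma isC_inner al be w F G : al <= be -> cont_on_X al be w -> cont_on_X al be F -> cont_on_X al be G ->
  isC (fun x => F x * Cconj (G x) * RtoC (w x))%C al be (inner_w al be w F G).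
Proof. intros Hab Hw HF HG. unfold inner_w.
 apply (isC_X al be _ (fun y => F (clamp al be y) * Cconj (G (clamp al be y)) * RtoC (w (clamp al be y)))%C).
 - exact Hab.
 - intros x. apply cont_integrand; apply cont_ext; auto.
 - intros x Hx. rewrite clamp_id; auto. Qed.

Lemma maxlist_ge (l : list R) x : In x l -> x <= maxlist l.
Proof. induction l; simpl; intros H. contradiction. destruct H as [->|H]. apply Rmax_l.
 eapply Rle_trans. apply IHl; auto. apply Rmax_r. Qed.
Lemma maxlist_ge0 (l : list R) : 0 <= maxlist l.
Proof. induction l; simpl. lra. eapply Rle_trans. apply IHl. apply Rmax_r. Qed.

Lemma argmax (phi : nat -> R) n : (0 < n)%nat -> exists j, (j < n)%nat /\ forall k, (k < n)%nat -> phi k <= phi j.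
Proof. induction n; intros H. lia. destruct n.
 - exists 0%nat. split. lia. intros k Hk. replace k with 0%nat by lia. lra.
 - destruct IHn as [j [Hj Hm]]. lia.
   destruct (Rle_dec (phi j) (phi (S n))).
   + exists (S n). split. lia. intros k Hk. destruct (Nat.eq_dec k (S n)). subst; lra.
     eapply Rle_trans. apply Hm. lia. auto.
   + exists j. split. lia. intros k Hk. destruct (Nat.eq_dec k (S n)). subst; lra. apply Hm. lia. Qed.

Lemma Cmod_sq (z : C) : Cmod z ^ 2 = fst z ^ 2 + snd z ^ 2.
Proof. unfold Cmod. rewrite pow2_sqrt. reflexivity. nra. Qed.


Lemma bounded1 al be (f : R -> C) : al <= be -> cont_on_X al be f ->
  exists M, forall x, inX al be x -> Cmod (f x) <= M.
Proof. intros Hab Hf. destruct (cont_max (fun y => Cmod (f (clamp al be y))) al be Hab) as [M HM].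
 intros x. apply cont_Cmod. apply cont_ext; auto.
 exists M. intros x Hx. specialize (HM x Hx). simpl in HM. rewrite clamp_id in HM; auto. Qed.

Lemma bounded_sum al be n (B : nat -> R -> C) : al <= be -> (forall j, (j < n)%nat -> cont_on_X al be (B j)) ->
  exists M, forall x, inX al be x -> rsum n (fun j => Cmod (B j x)) <= M.
Proof. intros Hab HB. induction n.
 - exists 0. intros. rewrite rsum_0. lra.
 - destruct IHn as [M HM]. intros; apply HB; lia.
   destruct (bounded1 al be (B n) Hab) as [Mn HMn]. apply HB; lia.
   exists (M + Mn). intros x Hx. rewrite rsum_S. specialize (HM x Hx). specialize (HMn x Hx). lra. Qed.

Lemma herm al be w (F G : R -> C) : al <= be -> cont_on_X al be w -> cont_on_X al be F -> cont_on_X al be G ->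
  inner_w al be w F G = Cconj (inner_w al be w G F).
Proof. intros Hab Hw HF HG.
 pose proof (isC_conj _ _ _ _ (isC_inner al be w G F Hab Hw HG HF)) as H.
 apply (is_RInt_ext _ (fun x => F x * Cconj (G x) * RtoC (w x))%C) in H.
 - unfold inner_w at 1. apply CInt_unique. exact H.
 - intros x _. Ceq. Qed.

Lemma gjj al be w (F : R -> C) : al <= be -> cont_on_X al be w -> cont_on_X al be F ->
  inner_w al be w F F = RtoC (RInt (fun y => Cmod (F y) ^ 2 * w y) al be).
Proof. intros Hab Hw HF.
 assert (H : is_RInt (fun y => Cmod (F y) ^ 2 * w y) al be (RInt (fun y => Cmod (F y) ^ 2 * w y) al be)).
 { apply (isR_X al be _ (fun y => Cmod (F (clamp al be y)) ^ 2 * w (clamp al be y))); auto.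
   - intros x. simpl. apply cR_mult. apply cR_mult. apply cont_Cmod, cont_ext; auto.
     apply cR_mult. apply cont_Cmod, cont_ext; auto. apply continuous_const. apply cont_ext; auto.
   - intros x Hx. rewrite clamp_id; auto. }
 apply isC_RtoC in H. apply (is_RInt_ext _ (fun x => F x * Cconj (F x) * RtoC (w x))%C) in H.
 - unfold inner_w. apply CInt_unique. exact H.
 - intros x _. rewrite Cmod_sq. Ceq. Qed.

Lemma Qpos al be w n (B : nat -> R -> C) j : al < be -> cont_on_X al be w -> (forall x, inX al be x -> 0 < w x) ->
  (forall j, (j < n)%nat -> cont_on_X al be (B j)) -> lin_indep al be n B -> (j < n)%nat ->
  0 < RInt (fun y => Cmod (B j y) ^ 2 * w y) al be.
Proof. intros Hab Hw Hwp HB Hind Hj.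
 destruct (classic (exists x0, inX al be x0 /\ B j x0 <> RtoC 0)) as [[x0 [Hx0 Hne]]|Hno].
 - rewrite (RInt_ext _ (fun y => Cmod (B j (clamp al be y)) ^ 2 * w (clamp al be y))).
   + apply (RInt_pos _ al be x0); auto.
     * intros x. simpl. apply cR_mult. apply cR_mult. apply cont_Cmod, cont_ext; auto; lra.
       apply cR_mult. apply cont_Cmod, cont_ext; auto; lra. apply continuous_const. apply cont_ext; auto; lra.
     * intros x Hx. rewrite clamp_id by auto. apply Rmult_le_pos. apply pow2_ge_0. apply Rlt_le, Hwp; auto.
     * rewrite clamp_id by auto. apply Rmult_lt_0_compat. 2: apply Hwp; auto.
       assert (0 < Cmod (B j x0)). { destruct (Cmod_ge_0 (B j x0)) as [h|h]; auto. symmetry in h. apply Cmod_eq_0 in h. contradiction. }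
       nra.
   + intros x Hx. rewrite clamp_id; auto. unfold inX, Rmin, Rmax in *. destruct Rle_dec; lra.
 - exfalso. assert (H := Hind (fun k => if Nat.eqb k j then RtoC 1 else RtoC 0)).
   assert (H1 : (if Nat.eqb j j then RtoC 1 else RtoC 0) = RtoC 0).
   { apply H; auto. intros x Hx. rewrite Csum_ind by auto. apply NNPP. intros Hn. apply Hno. eauto. }
   rewrite Nat.eqb_refl in H1. apply (f_equal fst) in H1. simpl in H1. lra. Qed.

Lemma bbound al be w (f F : R -> C) Fs : al <= be -> cont_on_X al be w -> (forall x, inX al be x -> 0 < w x) ->
  cont_on_X al be f -> cont_on_X al be F -> (forall x, inX al be x -> Cmod (f x) <= Fs) ->
  Cmod (inner_w al be w f F) <= Fs * RInt (fun y => Cmod (F y) * w y) al be.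
Proof. intros Hab Hw Hwp Hf HF HFs.
 assert (H : is_RInt (fun y => Cmod (F y) * w y) al be (RInt (fun y => Cmod (F y) * w y) al be)).
 { apply (isR_X al be _ (fun y => Cmod (F (clamp al be y)) * w (clamp al be y))); auto.
   - intros x. apply cR_mult. apply cont_Cmod, cont_ext; auto. apply cont_ext; auto.
   - intros x Hx. rewrite clamp_id; auto. }
 rewrite <- norm_Cmod.
 apply (norm_RInt_le (fun x => f x * Cconj (F x) * RtoC (w x))%C (fun y => Fs * (Cmod (F y) * w y)) al be); auto.
 - intros x Hx. rewrite norm_Cmod, !Cmod_mult, Cmod_conj, Cmod_R.
   rewrite Rabs_right by (apply Rle_ge, Rlt_le, Hwp; auto).
   assert (0 <= w x) by (apply Rlt_le, Hwp; auto). assert (0 <= Cmod (F x)) by apply Cmod_ge_0.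
   specialize (HFs x Hx). rewrite Rmult_assoc. apply Rmult_le_compat_r; auto. apply Rmult_le_pos; auto.
 - apply isC_inner; auto.
 - apply (@is_RInt_scal R_NormedModule _ _ _ Fs _ H). Qed.

Lemma lin_sys al be w n (B : nat -> R -> C) (f g : R -> C) (a : nat -> C) i :
  al <= be -> cont_on_X al be w -> cont_on_X al be f -> (forall k, (k < n)%nat -> cont_on_X al be (B k)) ->
  (i < n)%nat -> (forall x, inX al be x -> g x = Csum n (fun k => a k * B k x)%C) ->
  inner_w al be w (fun x => f x - g x)%C (B i) = RtoC 0 ->
  inner_w al be w f (B i) = Csum n (fun k => a k * gram al be w B k i)%C.
Proof. intros Hab Hw Hf HB Hi Hg Horth.
 assert (H : isC (fun x => (f x - g x) * Cconj (B i x) * RtoC (w x))%C al be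
              (inner_w al be w f (B i) - Csum n (fun k => a k * gram al be w B k i))%C).
 { apply (is_RInt_ext (fun x => f x * Cconj (B i x) * RtoC (w x) - Csum n (fun k => a k * (B k x * Cconj (B i x) * RtoC (w x))))%C).
   - intros x Hx. rewrite (Hg x). 2: unfold inX, Rmin, Rmax in *; destruct Rle_dec; lra.
     replace ((f x - Csum n (fun k => a k * B k x)) * Cconj (B i x) * RtoC (w x))%C with
       (f x * Cconj (B i x) * RtoC (w x) - Csum n (fun k => a k * B k x) * (Cconj (B i x) * RtoC (w x)))%C by ring.
     rewrite Csum_mult_r. f_equal. apply Csum_ext. intros; ring.
   - apply isC_minus. { apply isC_inner; auto. }
     apply (isC_Csum n (fun k x => a k * (B k x * Cconj (B i x) * RtoC (w x)))%C (fun k => a k * gram al be w B k i)%C).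
     intros k Hk. apply isC_mult_l. apply isC_inner; auto. }
 assert (E : (inner_w al be w f (B i) - Csum n (fun k => a k * gram al be w B k i))%C = RtoC 0).
 { rewrite <- Horth. symmetry. apply CInt_unique. exact H. }
 set (Y := Csum n _) in *. set (X := inner_w al be w f (B i)) in *.
 replace X with ((X - Y) + Y)%C by ring. rewrite E. ring. Qed.


Theorem mainTheorem12 (al be : R) (w : R -> R) (n : nat) (B : nat -> R -> C) (c : R) :
  al < be ->
  cont_on_X al be w ->
  (forall x, inX al be x -> 0 < w x) ->
  (forall j, (j < n)%nat -> cont_on_X al be (B j)) ->
  lin_indep al be n B ->
  (* S tridiagonal *)
  (forall i j, (i < n)%nat -> (j < n)%nat -> (i + 2 <= j \/ j + 2 <= i)%nat ->
     gram al be w B i j = RtoC 0) ->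
  0 < c < 1 ->
  (* row diagonal dominance, with s_{0,1} = s_{n,n+1} = 0 (1-indexed) *)
  (forall j, (j < n)%nat ->
     (match j with O => 0 | S k => Cmod (gram al be w B k j) end)
     + (if Nat.ltb (S j) n then Cmod (gram al be w B j (S j)) else 0)
     <= c * Cmod (gram al be w B j j)) ->
  Rbar_le (opnorm_proj al be w n B)
    (Finite
      (real (Lub_Rbar (fun r => exists x, inX al be x /\
                 r = fold_right Rplus 0 (map (fun j => Cmod (B j x)) (seq 0 n))))
       / (1 - c)
       * maxlist (map (fun j =>
            RInt (fun y => Cmod (B j y) * w y) al be
            / RInt (fun y => Cmod (B j y) ^ 2 * w y) al be) (seq 0 n)))).
Proof.
 intros Hab Hw Hwp HB Hind Htri Hc Hdom.
 assert (Hab' : al <= be) by lra.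
 set (E := fun r => exists x, inX al be x /\ r = fold_right Rplus 0 (map (fun j => Cmod (B j x)) (seq 0 n))).
 destruct (bounded_sum al be n B Hab' HB) as [MS HMS].
 destruct (lub_fin E (rsum n (fun j => Cmod (B j al))) MS) as [HSge _].
 { exists al. split. unfold inX; lra. reflexivity. }
 { intros r [x [Hx ->]]. apply HMS; auto. }
 set (Ssum := real (Lub_Rbar E)) in *.
 assert (HS : forall x, inX al be x -> rsum n (fun j => Cmod (B j x)) <= Ssum).
 { intros x Hx. apply HSge. exists x. split; auto. }
 assert (HS0 : 0 <= Ssum).
 { eapply Rle_trans. apply rsum_ge0. intros; apply Cmod_ge_0. apply (HS al). unfold inX; lra. }
 set (P := fun j => RInt (fun y => Cmod (B j y) * w y) al be).
 set (Q := fun j => RInt (fun y => Cmod (B j y) ^ 2 * w y) al be).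
 match goal with |- context [maxlist ?l] => set (K := maxlist l) end.
 assert (HK0 : 0 <= K) by apply maxlist_ge0.
 assert (HKj : forall j, (j < n)%nat -> P j / Q j <= K).
 { intros j Hj. apply maxlist_ge. apply in_map_iff. exists j. split. reflexivity. apply in_seq. lia. }
 assert (HQ : forall j, (j < n)%nat -> 0 < Q j).
 { intros j Hj. apply (Qpos al be w n B j); auto. }
 assert (Hgjj : forall j, (j < n)%nat -> Cmod (gram al be w B j j) = Q j).
 { intros j Hj. unfold gram. rewrite gjj; auto. rewrite Cmod_R. apply Rabs_right. apply Rle_ge, Rlt_le, HQ; auto. }
 assert (Hsym : forall k l, (k < n)%nat -> (l < n)%nat -> Cmod (gram al be w B k l) = Cmod (gram al be w B l k)).
 { intros k l Hk Hl. unfold gram. rewrite herm; auto. apply Cmod_conj. }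
 assert (Hcc : 0 < 1 - c) by lra.
 unfold opnorm_proj.
 destruct (Lub_Rbar_correct (fun r => exists f g : R -> C,
    cont_on_X al be f /\ (exists x, inX al be x /\ f x <> RtoC 0) /\
    is_proj al be w n B f g /\ r = supnorm al be g / supnorm al be f)) as [_ Hl].
 apply Hl. clear Hl.
 intros r [f [g [Hf [[x0 [Hx0 Hf0]] [[[a Ha] Horth] ->]]]]]. simpl.
 destruct (bounded1 al be f Hab' Hf) as [Mf HMf].
 destruct (lub_fin (fun r => exists x, inX al be x /\ r = Cmod (f x)) (Cmod (f x0)) Mf) as [HFge _].
 { exists x0; auto. }
 { intros r [x [Hx ->]]; auto. }
 assert (HF : forall x, inX al be x -> Cmod (f x) <= supnorm al be f).
 { intros x Hx. apply HFge. exists x; auto. }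
 set (Fs := supnorm al be f) in *.
 assert (HFpos : 0 < Fs).
 { apply Rlt_le_trans with (Cmod (f x0)); auto.
   destruct (Cmod_ge_0 (f x0)) as [h|h]; auto. symmetry in h. apply Cmod_eq_0 in h. contradiction. }
 assert (HA : forall k, (k < n)%nat -> Cmod (a k) <= Fs * K / (1 - c)).
 { intros k Hk.
   destruct (argmax (fun k => Cmod (a k)) n) as [j [Hj Hmax]]. lia.
   apply Rle_trans with (Cmod (a j)); [apply Hmax; auto|].
   assert (Hspan : in_span al be n B (B j)).
   { exists (fun k => if Nat.eqb k j then RtoC 1 else RtoC 0). intros x Hx. symmetry. apply Csum_ind; auto. }
   assert (Hsys := lin_sys al be w n B f g a j Hab' Hw Hf HB Hj Ha (Horth (B j) Hspan)).
   rewrite (Csum_split _ _ j Hj) in Hsys. cbv beta in Hsys.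
   assert (HR : Cmod (Csum n (fun k => if Nat.eqb k j then RtoC 0 else (a k * gram al be w B k j)%C)) <= Cmod (a j) * (c * Q j)).
   { eapply Rle_trans. apply Cmod_Csum.
     eapply Rle_trans. apply (rsum_le _ _ (fun k => Cmod (a j) * (if Nat.eqb k j then 0 else Cmod (gram al be w B k j)))).
     { intros l Hl. destruct (Nat.eqb l j). rewrite Cmod_0, Rmult_0_r. lra.
       rewrite Cmod_mult. apply Rmult_le_compat_r. apply Cmod_ge_0. apply Hmax; auto. }
     rewrite <- rsum_mult_l. apply Rmult_le_compat_l. apply Cmod_ge_0.
     rewrite rsum_tri.
     2: { intros l Hl h1 h2 h3. rewrite Htri; auto. apply Cmod_0. lia. }
     rewrite <- Hgjj by auto. generalize (Hdom j Hj). destruct j as [|p]; dltb; try lia.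
     - rewrite (Hsym 1%nat 0%nat) by lia. lra.
     - lra.
     - rewrite (Hsym (S (S p)) (S p)) by lia. lra.
     - lra. }
   set (Rr := Csum n _) in HR, Hsys.
   assert (H1 : Cmod (a j) * Q j <= Cmod (inner_w al be w f (B j)) + Cmod Rr).
   { rewrite <- Hgjj by auto. rewrite <- Cmod_mult.
     replace (a j * gram al be w B j j)%C with (inner_w al be w f (B j) - Rr)%C by (rewrite Hsys; ring).
     unfold Cminus. eapply Rle_trans. apply Cmod_triangle. rewrite Cmod_opp. lra. }
   assert (Hb : Cmod (inner_w al be w f (B j)) <= Fs * P j).
   { apply bbound; auto. }
   assert (HPK : P j <= K * Q j). { apply Rle_div_l. apply HQ; auto. apply HKj; auto. }
   assert (HQj := HQ j Hj).
   assert (H2 : Cmod (a j) * ((1 - c) * Q j) <= Fs * K * Q j).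
   { apply Rle_trans with (Fs * P j). nra. rewrite Rmult_assoc. apply Rmult_le_compat_l; lra. }
   apply Rmult_le_reg_r with ((1 - c) * Q j). nra.
   replace (Fs * K / (1 - c) * ((1 - c) * Q j)) with (Fs * K * Q j) by (field; lra). exact H2. }
 apply Rle_div_l; auto.
 apply lub_le.
 - intros r [x [Hx ->]]. rewrite (Ha x Hx).
   eapply Rle_trans. apply Cmod_Csum.
   eapply Rle_trans. apply (rsum_le _ _ (fun k => Fs * K / (1 - c) * Cmod (B k x))).
   { intros k Hk. rewrite Cmod_mult. apply Rmult_le_compat_r. apply Cmod_ge_0. auto. }
   rewrite <- rsum_mult_l.
   apply Rle_trans with (Fs * K / (1 - c) * Ssum).
   { apply Rmult_le_compat_l. apply Rmult_le_pos. nra. apply Rlt_le, Rinv_0_lt_compat; auto. auto. }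
   apply Req_le. field. lra.
 - apply Rmult_le_pos. apply Rmult_le_pos. apply Rmult_le_pos; auto. apply Rlt_le, Rinv_0_lt_compat; auto. auto. lra.
Qed.
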